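(* Let $\mathscr D:\mathscr N=\mathscr N_1\cup\cdots\cup\mathscr N_k$ be a pairwise min-max decomposition of a chemical reaction network $\mathscr N$ such that every linkage class of $\mathscr N$ contains at most one common complex. Then $\mathscr D$ is incidence independent.
   Context: A CRN $\mathscr N=(\mathscr S,\mathscr C,\mathscr R)$ is viewed as a directed graph on its complexes with arcs its reactions; linkage classes are the connected components of the underlying undirected graph. A decomposition $\mathscr N=\mathscr N_1\cup\cdots\cup\mathscr N_k$ ($k\ge2$) is given by a partition $\{\mathscr R_1,\dots,\mathscr R_k\}$ of the reaction set; the subnetwork $\mathscr N_i$ has reactions $\mathscr R_i$ and complex set $\mathscr C_i$ consisting of the complexes occurring in reactions of $\mathscr R_i$. The set $\mathscr C_{\mathscr D}$ of common complexes consists of the complexes lying in the complex sets of at least two distinct subnetworks. The decomposition is pairwise min-max (PMM) if for all $i\ne j$, either $\mathscr C_i\cap\mathscr C_j=\varnothing$ or $\mathscr C_i\cap\mathscr C_j=\mathscr C_{\mathscr D}$. With $n,\ell$ the numbers of complexes and linkage classes of $\mathscr N$ and $n_i,\ell_i$ those of $\mathscr N_i$, the decomposition is incidence independent if the image of the incidence map of $\mathscr N$ (the linear map $\mathbb R^{\mathscr R}\to\mathbb R^{\mathscr C}$ sending a reaction $y\to y'$ to $\omega_{y'}-\omega_y$) is the direct sum of the images of the incidence maps of the $\mathscr N_i$, equivalently $n-\ell=\sum_i(n_i-\ell_i)$. *)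

(* Defs.v *)
From HB Require Import structures.
From Stdlib Require Import Rdefinitions.
From mathcomp Require Import all_boot all_order all_algebra.
From mathcomp Require Import Rstruct.
Set Implicit Arguments. Unset Strict Implicit. Unset Printing Implicit Defensive.
Import GRing.Theory Num.Theory.
Local Open Scope ring_scope.
Notation R := Rdefinitions.R.

Definition is_crn (C Rx : finType) (src tgt : Rx -> C) : Prop :=
  [/\ forall r, src r != tgt r,
      forall c, exists r, src r = c \/ tgt r = c
    & injective (fun r => (src r, tgt r))].

Definition adj (C Rx : finType) (src tgt : Rx -> C) : rel C :=
  fun x y => [exists r, ((src r == x) && (tgt r == y)) || ((src r == y) && (tgt r == x))].

Definition same_linkage_class (C Rx : finType) (src tgt : Rx -> C) : rel C :=
  connect (adj src tgt).

(* A decomposition into k subnetworks: part r = i means r belongs to R_i.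
   It is a partition of the reaction set into k (nonempty) blocks, k >= 2. *)
Definition is_decomposition (Rx : finType) (k : nat) (part : Rx -> 'I_k) : Prop :=
  (2 <= k)%N /\ forall i : 'I_k, exists r, part r = i.

Definition sub_complexes (C Rx : finType) (src tgt : Rx -> C) (k : nat)
    (part : Rx -> 'I_k) (i : 'I_k) : {set C} :=
  [set c | [exists r, (part r == i) && ((src r == c) || (tgt r == c))]].

Definition common_complexes (C Rx : finType) (src tgt : Rx -> C) (k : nat)
    (part : Rx -> 'I_k) : {set C} :=
  [set c | [exists i, exists j, [&& i != j, c \in sub_complexes src tgt part i
                                         & c \in sub_complexes src tgt part j]]].

Definition is_PMM (C Rx : finType) (src tgt : Rx -> C) (k : nat)
    (part : Rx -> 'I_k) : Prop :=
  forall i j : 'I_k, i != j ->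
    sub_complexes src tgt part i :&: sub_complexes src tgt part j = set0 \/
    sub_complexes src tgt part i :&: sub_complexes src tgt part j
      = common_complexes src tgt part.

(* Incidence vector of reaction r = (y -> y') in R^C : omega_{y'} - omega_y,
   coordinates indexed by enum C. *)
Definition inc_vec (C Rx : finType) (src tgt : Rx -> C) (r : Rx) : 'rV[R]_#|C| :=
  \row_j (((enum_val j == tgt r)%:R : R) - (enum_val j == src r)%:R).

(* Matrix whose row space is the image of the incidence map of the
   network restricted to the reactions satisfying P (rows of other
   reactions are zero). *)
Definition inc_mx (C Rx : finType) (src tgt : Rx -> C) (P : pred Rx)
    : 'M[R]_(#|Rx|, #|C|) :=
  \matrix_i (if P (enum_val i) then inc_vec src tgt (enum_val i) else 0).

(* image of the incidence map of the subnetwork N_i (as a canonical square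
   matrix whose row space is that image) *)
Definition sub_inc_mx (C Rx : finType) (src tgt : Rx -> C) (k : nat)
    (part : Rx -> 'I_k) (i : 'I_k) : 'M[R]_#|C| :=
  let A := inc_mx src tgt (fun r => part r == i) in (<< A >>)%MS.

Definition incidence_independent (C Rx : finType) (src tgt : Rx -> C) (k : nat)
    (part : Rx -> 'I_k) : Prop :=
  ((\sum_(i < k) sub_inc_mx src tgt part i)%MS == inc_mx src tgt predT)%MS
  /\ mxdirect (\sum_(i < k) sub_inc_mx src tgt part i)%MS.

(* Main.v *)
Require Import Defs.
From HB Require Import structures.
From mathcomp Require Import all_boot all_order all_algebra.
From mathcomp Require Import Rstruct.
Set Implicit Arguments. Unset Strict Implicit. Unset Printing Implicit Defensive.
Import GRing.Theory Num.Theory.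
Local Open Scope ring_scope.

Lemma sumC (C : finType) (F : 'I_#|C| -> R) :
  \sum_(l < #|C|) F l = \sum_(c : C) F (enum_rank c).
Proof. by rewrite (reindex enum_rank) //; apply: onW_bij; apply: enum_rank_bij. Qed.

Lemma sum_eq1 (C : finType) (t : C) (g : C -> R) :
  \sum_(c : C) (c == t)%:R * g c = g t.
Proof.
rewrite (bigD1 t) //= eqxx mul1r big1 ?addr0 // => c /negbTE ->; by rewrite mul0r.
Qed.

Definition ind (C : finType) (S : {set C}) : 'cV[R]_#|C| :=
  \col_l ((enum_val l \in S)%:R).

Lemma inc_mul_ind (C Rx : finType) (src tgt : Rx -> C) (P : pred Rx) (S : {set C}) :
  (forall r, P r -> (src r \in S) = (tgt r \in S)) ->
  inc_mx src tgt P *m ind S = 0.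
Proof.
move=> HS; apply/matrixP => r c; rewrite !mxE.
rewrite /inc_mx /ind. under eq_bigr => l _ do rewrite !mxE. case: ifP => Pr.
- 
  rewrite sumC.
  under eq_bigr => x _ do rewrite !mxE enum_rankK mulrBl.
  by rewrite sumrB !sum_eq1 HS // subrr.
- by apply: big1 => l _; rewrite !mxE mul0r.
Qed.

Lemma sub_ind (C Rx : finType) (src tgt : Rx -> C) (P : pred Rx) (S : {set C})
   (w : 'rV[R]_#|C|) :
  (forall r, P r -> (src r \in S) = (tgt r \in S)) ->
  (w <= inc_mx src tgt P)%MS ->
  \sum_(c : C) w 0 (enum_rank c) * (c \in S)%:R = 0.
Proof.
move=> HS /submxP [D ->].
have E : D *m inc_mx src tgt P *m ind S = 0.
    by rewrite -mulmxA (inc_mul_ind HS); apply/matrixP => a b; rewrite !mxE big1 // => l _; rewrite mxE mulr0.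
have := congr1 (fun M : 'M[R]_1 => M 0 0) E.
rewrite [in X in X = _ -> _]mxE sumC mxE => H; apply: eq_trans H.
apply: eq_bigr => c _; by rewrite /ind [X in _ = _ * X]mxE enum_rankK.
Qed.

Definition adjp (C Rx : finType) (src tgt : Rx -> C) (k : nat) (part : Rx -> 'I_k)
  (j : 'I_k) : rel C :=
  fun a b => [exists r, (part r == j) &&
     (((src r == a) && (tgt r == b)) || ((src r == b) && (tgt r == a)))].

Lemma key (C Rx : finType) (src tgt : Rx -> C) (k : nat) (part : Rx -> 'I_k) :
  (forall c d, c \in common_complexes src tgt part ->
               d \in common_complexes src tgt part ->
               same_linkage_class src tgt c d -> c = d) ->
  forall v : 'I_k -> 'rV[R]_#|C|,
  (forall j, v j <= inc_mx src tgt (fun r => (part r == j)%B))%MS ->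
  \sum_j v j = 0 -> forall j, v j = 0.
Proof.
move=> Hlc v Hv Hs.
have A : forall j x, x \notin sub_complexes src tgt part j -> v j 0 (enum_rank x) = 0.
  move=> j x Hx.
  have HS : forall r, part r == j -> (src r \in [set x]) = (tgt r \in [set x]).
    move=> r Pr; rewrite inE in Hx.
    move/existsPn/(_ r): Hx; rewrite Pr /= negb_or => /andP[/negbTE h1 /negbTE h2].
    by rewrite !inE h1 h2.
  have := sub_ind HS (Hv j).
  rewrite (bigD1 x) //= inE eqxx mulr1 big1 ?addr0 // => c /negbTE hc.
  by rewrite inE hc mulr0.
have B : forall j x, x \notin common_complexes src tgt part -> v j 0 (enum_rank x) = 0.
  move=> j x Hx.
  case: (boolP (x \in sub_complexes src tgt part j)) => Hxj; last exact: A.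
  have : (\sum_l v l) 0 (enum_rank x) = 0 by rewrite Hs mxE.
  rewrite summxE (bigD1 j) //= big1 ?addr0 // => l hl.
  apply: A; apply: contra Hx => Hxl.
  rewrite inE; apply/existsP; exists j; apply/existsP; exists l.
  by rewrite eq_sym hl Hxj Hxl.
move=> j; apply/rowP => l; rewrite mxE -(enum_valK l).
set x := enum_val l.
case: (boolP (x \in common_complexes src tgt part)) => Hx; last exact: B.
set S := [set y | connect (adjp src tgt part j) x y].
have HS : forall r, part r == j -> (src r \in S) = (tgt r \in S).
  move=> r Pr; rewrite !inE.
  have h1 : adjp src tgt part j (src r) (tgt r).
    by apply/existsP; exists r; rewrite Pr !eqxx.
  have h2 : adjp src tgt part j (tgt r) (src r).
    by apply/existsP; exists r; rewrite Pr !eqxx orbT.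
  by apply/idP/idP => H; apply: connect_trans H (connect1 _).
have := sub_ind HS (Hv j).
rewrite (bigD1 x) //= inE connect0 mulr1 big1 ?addr0 // => c hc.
case: (boolP (c \in S)) => hcS; last by rewrite mulr0.
rewrite inE in hcS.
rewrite B ?mul0r //; apply: contra hc => Hc; apply/eqP; symmetry.
apply: Hlc Hx Hc _; rewrite /same_linkage_class.
apply: connect_sub hcS => a b /existsP [r /andP [_ h]].
by apply: connect1; apply/existsP; exists r.
Qed.

Theorem proposition6 (C Rx : finType) (src tgt : Rx -> C) (k : nat)
    (part : Rx -> 'I_k) :
  is_crn src tgt ->
  is_decomposition part ->
  is_PMM src tgt part ->
  (forall c d, c \in common_complexes src tgt part ->
               d \in common_complexes src tgt part ->
               same_linkage_class src tgt c d -> c = d) ->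
  incidence_independent src tgt part.
Proof.
move=> _ _ _ Hlc; split.
- apply/andP; split.
  + apply/sumsmx_subP => i _; rewrite /sub_inc_mx genmxE; apply/row_subP => r.
    rewrite /inc_mx rowK; case: ifP => _; last exact: sub0mx.
    by have := row_sub r (inc_mx src tgt predT); rewrite /inc_mx rowK.
  + have -> : inc_mx src tgt predT = (\sum_(i < k) inc_mx src tgt (fun r => part r == i))%R.
      apply/matrixP => r c; rewrite summxE /inc_mx mxE /=.
      under eq_bigr => i _ do rewrite mxE.
      rewrite (bigD1 (part (enum_val r))) //= eqxx big1 ?addr0 // => i hi.
      by rewrite eq_sym (negbTE hi) mxE.
    by apply: summx_sub_sums => i _; rewrite /sub_inc_mx genmxE.
- apply/mxdirect_sumsP => i _.
  apply/eqP; rewrite -submx0; apply/row_subP => r; rewrite submx0; apply/eqP.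
  set w := row r _.
  have w1 : (w <= sub_inc_mx src tgt part i)%MS.
    by rewrite (submx_trans (row_sub r _)) // capmxSl.
  have : (w <= \sum_(j | true && (j != i)) sub_inc_mx src tgt part j)%MS.
    by rewrite (submx_trans (row_sub r _)) // capmxSr.
  case/sub_sumsmxP => u Hu.
  pose v j := if j == i then - w else u j *m sub_inc_mx src tgt part j.
  have Hv' : forall j, (v j <= sub_inc_mx src tgt part j)%MS.
    move=> j; rewrite /v.
    case: eqP => [->|_]; first by rewrite eqmx_opp.
    exact: submxMl.
  have Hv : forall j, (v j <= inc_mx src tgt (fun r => (part r == j)%B))%MS.
    by move=> j; have := Hv' j; rewrite /sub_inc_mx genmxE.
  have Hs : \sum_j v j = 0.
    rewrite (bigD1 i) //= /v eqxx.
    under eq_bigr => j hj do rewrite (negbTE hj).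
    by rewrite /= in Hu; rewrite -Hu addNr.
  have := key Hlc Hv Hs i; rewrite /v eqxx => /eqP; rewrite oppr_eq0 => /eqP.
  done.
Qed.
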